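(* Assume the Continuum Hypothesis. Every real Banach space $X$ with $\operatorname{dens} X = \operatorname{dens} X^* = \omega_1$ contains an overcomplete set.
   Context: $\operatorname{dens}$ denotes the density character. A subset $S$ of a Banach space $X$ with $|S| = \operatorname{dens} X$ is called overcomplete if every subset $\Lambda \subseteq S$ with $|\Lambda| = |S|$ is linearly dense in $X$ (its closed linear span is $X$). *)

(* Defs.v *)
From HB Require Import structures.
From mathcomp Require Import all_boot all_order all_algebra.
From mathcomp Require Import all_classical all_reals all_analysis.
Set Implicit Arguments. Unset Strict Implicit. Unset Printing Implicit Defensive.
Import Order.TTheory GRing.Theory Num.Theory.
Import numFieldNormedType.Exports.
Local Open Scope classical_set_scope.
Local Open Scope ring_scope.

(* |A| = aleph_1 : A is uncountable and admits a well-order all of whose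
   initial segments are countable (i.e. a well-order of type omega_1). *)
Definition is_aleph1 (T : Type) (A : set T) : Prop :=
  ~ countable A /\
  exists r : T -> T -> Prop,
    (forall x y, A x -> A y -> r x y \/ r y x) /\
    (forall x y, A x -> A y -> r x y -> r y x -> x = y) /\
    (forall x y z, A x -> A y -> A z -> r x y -> r y z -> r x z) /\
    (forall B, B `<=` A -> B !=set0 -> exists2 m, B m & forall y, B y -> r m y) /\
    (forall x, A x -> countable [set y | A y /\ r y x]).

Definition CH (R : realType) : Prop := is_aleph1 [set: R].

Definition dens_is_aleph1 (T : Type) (isdense : set T -> Prop) : Prop :=
  (exists D, isdense D /\ is_aleph1 D) /\
  (forall D, isdense D -> ~ countable D).

Definition dual_elt (R : realType) (X : normedModType R) (f : X -> R) : Prop :=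
  (forall (a : R) (u v : X), f (a *: u + v) = a * f u + f v) /\ continuous f.

(* D is a dense subset of X^* for the dual (operator) norm
   ||f|| = sup_{||x|| <= 1} |f x|. *)
Definition dual_dense (R : realType) (X : normedModType R)
    (D : set (X -> R)) : Prop :=
  D `<=` @dual_elt R X /\
  forall f, dual_elt f -> forall eps : R, 0 < eps ->
    exists2 g, D g & forall x : X, `|x| <= 1 -> `|f x - g x| <= eps.

Definition lin_span (R : realType) (X : normedModType R) (L : set X) : set X :=
  [set x | exists n (a : 'I_n -> R) (v : 'I_n -> X),
             (forall i, L (v i)) /\ x = \sum_(i < n) a i *: v i].

Definition linearly_dense (R : realType) (X : normedModType R) (L : set X) : Prop :=
  closure (lin_span L) = setT.

Definition card_is_dens (R : realType) (X : normedModType R) (S : set X) : Prop :=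
  (exists D : set X, dense D /\ card_eq S D) /\
  (forall D : set X, dense D -> card_le S D).

Definition overcomplete (R : realType) (X : normedModType R) (S : set X) : Prop :=
  card_is_dens S /\
  forall L : set X, L `<=` S -> card_eq L S -> linearly_dense L.

(* Main.v *)
Require Import Defs.
From HB Require Import structures.
From mathcomp Require Import all_boot all_order all_algebra.
From mathcomp Require Import all_classical all_reals all_analysis.
From mathcomp Require Import ring lra.
Set Implicit Arguments. Unset Strict Implicit. Unset Printing Implicit Defensive.
Import Order.TTheory GRing.Theory Num.Theory.
Import numFieldNormedType.Exports.
Local Open Scope classical_set_scope.
Local Open Scope ring_scope.

Lemma card_le_fun T U (A : set T) (B : set U) (f : T -> U) :
  (forall x, A x -> B (f x)) ->
  (forall x y, A x -> A y -> f x = f y -> x = y) -> card_le A B.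
Proof.
move=> fAB finj.
have : $|{injfun A >-> B}|.
  apply/injfunPex; exists f.
    by move=> x; apply: fAB.
  by move=> x y; rewrite !inE => Ax Ay; apply: finj.
by case=> g; exact: inj_card_le g.
Qed.

Definition pick_or (U : Type) (P : U -> Prop) (u0 : U) : U :=
  match pselect (exists u, P u) with
  | left h => proj1_sig (cid h)
  | right _ => u0
  end.

Lemma pick_orP (U : Type) (P : U -> Prop) (u0 : U) :
  (exists u, P u) -> P (pick_or P u0).
Proof.
rewrite /pick_or; case: pselect => // h _.
exact: (proj2_sig (cid h)).
Qed.

Lemma countable_image T U (A : set T) (f : T -> U) :
  countable A -> countable (f @` A).
Proof. by move=> cA; apply: card_le_trans (card_image_le f A) cA. Qed.

Section L1.
Variables (T U : Type) (A : set T) (B : set U).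
Hypothesis hA : is_aleph1 A.
Hypothesis hB : ~ countable B.

Lemma aleph1_le : card_le A B.
Proof.
case: hA => _ [r [rtot [ranti [rtr [rmin rcnt]]]]].
pose lt x y := A x /\ A y /\ r x y /\ x <> y.
have wf : well_founded lt.
  move=> x; apply: contrapT => nAx.
  have Ax : A x.
    apply: contrapT => nA; apply: nAx; constructor => y [_ [Ax' _]]; by [].
  have [m [Am nAm] mmin] : exists2 m, (fun y => A y /\ ~ Acc lt y) m &
      forall y, (fun y => A y /\ ~ Acc lt y) y -> r m y.
    apply: rmin; first by move=> y [].
    by exists x.
  apply: nAm; constructor => y [Ay [_ [rym ym]]].
  apply: contrapT => nAy; apply: ym; apply: ranti => //.
  exact: mmin.
have [u0 Bu0] : exists u, B u.
  apply: contrapT => nB; apply: hB.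
  have -> : B = set0 by apply/seteqP; split => u Bu //; apply: nB; exists u.
  exact: countable0.
pose F := fun x (rec : forall y, lt y x -> U) =>
  pick_or (fun u => B u /\ forall y (h : lt y x), rec y h <> u) u0.
pose h := Fix wf (fun _ => U) F.
have hE : forall x, h x = F x (fun y _ => h y).
  apply: Fix_eq => x f g fg.
  have -> : f = g.
    apply: functional_extensionality_dep => y.
    apply: functional_extensionality_dep => p; exact: fg.
  by [].
have hspec : forall x, A x -> B (h x) /\ forall y, lt y x -> h y <> h x.
  move=> x Ax.
  have ex : exists u, B u /\ forall y (p : lt y x), h y <> u.
    apply: contrapT => nex; apply: hB.
    have sub : B `<=` h @` [set y | A y /\ r y x].
      move=> u Bu; apply: contrapT => nim; apply: nex; exists u; split => //.
      move=> y [Ay [_ [ryx _]]] hyu; apply: nim; by exists y.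
    apply: sub_countable (subset_card_le sub) _.
    exact: countable_image (rcnt x Ax).
  have := pick_orP u0 ex; rewrite -/(F x _) -hE => -[Bh hne].
  split => // y lyx; exact: hne.
apply: (card_le_fun (f := h)).
  by move=> x Ax; case: (hspec x Ax).
move=> x y Ax Ay hxy; apply: contrapT => xy.
case: (rtot x y Ax Ay) => rxy.
  by case: (hspec y Ay) => _ /(_ x (conj Ax (conj Ay (conj rxy xy)))).
have yx : y <> x by move=> e; apply: xy.
by case: (hspec x Ax) => _ /(_ y (conj Ay (conj Ax (conj rxy yx)))); rewrite hxy.
Qed.
End L1.

Section Sigma.
Variable R : realType.
Let w : R := 3^-1.
Let w_ge0 : 0 <= w. Proof. by rewrite /w invr_ge0. Qed.
Let w_gt0 : 0 < w. Proof. by rewrite /w invr_gt0. Qed.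

Lemma geom_sum (a n : nat) : (a <= n)%N ->
  \sum_(a <= k < n) (w ^+ k.+1 * 2) = w ^+ a - w ^+ n.
Proof.
move=> an.
rewrite (telescope_sumr_eq (fun k => - w ^+ k)) //; first by rewrite opprK addrC.
move=> k _; rewrite exprS /w; field => //.
Qed.

Lemma geom_bound (a n : nat) : \sum_(a <= k < n) w ^+ k.+1 <= w ^+ a / 2.
Proof.
case: (leqP a n) => an; last first.
  rewrite big_geq; last exact: ltnW.
  by rewrite divr_ge0 // exprn_ge0.
have := geom_sum an; rewrite -mulr_suml => h.
have : \sum_(a <= k < n) w ^+ k.+1 = (w ^+ a - w ^+ n) / 2.
  by rewrite -h mulfK.
move=> ->; rewrite ler_pM2r ?invr_gt0 //.
by rewrite gerBl exprn_ge0.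
Qed.

Definition psum (b : nat -> bool) (n : nat) : R :=
  \sum_(0 <= k < n) (if b k then w ^+ k.+1 else 0).

Definition sigma (b : nat -> bool) : R := sup (range (psum b)).

Lemma psum_ge0 b n : 0 <= psum b n.
Proof. by apply: sumr_ge0 => k _; case: (b k) => //; exact: exprn_ge0. Qed.

Lemma psum_le b (a n : nat) : psum b n <= psum b a + w ^+ a.+1 / 2 + (if b a then w ^+ a.+1 else 0).
Proof.
have hb : 0 <= (if b a then w ^+ a.+1 else 0) by case: (b a) => //; exact: exprn_ge0.
case: (leqP n a) => na.
  rewrite /psum (big_cat_nat (leq0n n) na) /=.
  rewrite -!addrA lerDl; apply: addr_ge0.
    by apply: sumr_ge0 => k _; case: (b k) => //; exact: exprn_ge0.
  by rewrite addr_ge0 // divr_ge0 // exprn_ge0.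
rewrite /psum (big_cat_nat (leq0n a) (ltnW na)) /=.
rewrite (big_ltn na) /= -!addrA lerD2l addrC lerD2r.
apply: le_trans (geom_bound a.+1 n).
apply: ler_sum_nat => k _; case: (b k) => //; exact: exprn_ge0.
Qed.

Lemma psum_ub b n : psum b n <= 1.
Proof.
apply: le_trans (psum_le b 0 n) _.
rewrite /psum big_geq //= add0r expr1.
case: (b 0%N); rewrite /w; lra.
Qed.

Lemma has_sup_psum b : has_sup (range (psum b)).
Proof.
split; first by exists (psum b 0); exists 0%N.
by exists 1 => _ [n _ <-]; exact: psum_ub.
Qed.

Lemma sigma_inj : injective sigma.
Proof.
suff key : forall b b' m, b m = true -> b' m = false ->
    (forall k, (k < m)%N -> b k = b' k) -> sigma b' < sigma b.
  move=> b b' e; apply/funext => k; apply: contrapT => nk.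
  have ex : exists k, b k != b' k by exists k; apply/eqP.
  case: (ex_minnP ex) => m /eqP bm mmin.
  have agree : forall k, (k < m)%N -> b k = b' k.
    move=> j jm; apply: contrapT => /eqP nj.
    by have := mmin j nj; rewrite leqNgt jm.
  move: bm; case bE : (b m); case b'E : (b' m) => // _.
    by have := key _ _ _ bE b'E agree; rewrite e ltxx.
  have := key b' b m b'E bE (fun k km => esym (agree k km)).
  by rewrite e ltxx.
move=> b b' m bm b'm agree.
have eqP : psum b m = psum b' m.
  by apply: eq_big_nat => k /andP[_ km]; rewrite agree.
apply: (@lt_le_trans _ _ (psum b m + w ^+ m.+1)).
  apply: (@le_lt_trans _ _ (psum b' m + w ^+ m.+1 / 2)).
    apply: ge_sup; first by exists (psum b' 0); exists 0%N.
    move=> _ [n _ <-]; have := psum_le b' m n; rewrite b'm addr0; exact.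
  rewrite eqP ltrD2l ltr_pdivrMr // ltr_pMr ?exprn_gt0 //; lra.
apply: (@le_trans _ _ (psum b m.+1)).
  by rewrite /psum big_nat_recr //= bm.
by apply: sup_upper_bound; [exact: has_sup_psum | exists m.+1].
Qed.

Lemma seq_inj : exists g : (nat -> R) -> R, injective g.
Proof.
pose code (F : nat -> R) : nat -> bool := fun n =>
  match (@unpickle (nat * rat)%type n) with
  | Some (i, q) => ratr q < F i
  | None => false end.
exists (sigma \o code) => F F' /sigma_inj e.
apply/funext => i; apply/eqP; rewrite eq_le; apply/andP; split;
  rewrite leNgt; apply/negP => lt.
  have [q] := rat_in_itvoo lt; rewrite in_itv /= => /andP[h1 h2].
  have := congr1 (fun c => c (pickle (i, q))) e; rewrite /code /= pickleK h2 => /esym.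
  by rewrite ltNge (ltW h1).
have [q] := rat_in_itvoo lt; rewrite in_itv /= => /andP[h1 h2].
have := congr1 (fun c => c (pickle (i, q))) e; rewrite /code /= pickleK h2.
by rewrite ltNge (ltW h1).
Qed.
End Sigma.

Definition subsp (R : realType) (X : normedModType R) (V : set X) := V 0 /\ forall (a : R) u v, V u -> V v -> V (a *: u + v).

Section HB.
Variables (R : realType) (X : normedModType R).


Variables (V : set X) (x0 : X) (d : R).
Hypothesis hV : subsp V.
Hypothesis d_gt0 : 0 < d.
Hypothesis hd : forall y, V y -> d <= `|x0 - y|.

Let p (x : X) : R := `|x| / d.
Let p_ge0 x : 0 <= p x. Proof. by rewrite /p divr_ge0 // ltW. Qed.
Let pD x y : p (x + y) <= p x + p y.
Proof. by rewrite /p -mulrDl ler_pM2r ?invr_gt0 // ler_normD. Qed.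
Let pZ (l : R) x : 0 <= l -> p (l *: x) = l * p x.
Proof. by move=> l0; rewrite /p normrZ ger0_norm // mulrA. Qed.
Let pN x : p (- x) = p x. Proof. by rewrite /p normrN. Qed.

Lemma swap_eq (V' : zmodType) (u1 u2 w1 w2 : V') : u1 + w1 = u2 + w2 -> w1 - w2 = u2 - u1.
Proof. by move=> e; apply/eqP; rewrite subr_eq addrAC -e [u1 + w1]addrC addrK. Qed.

Definition good (G : set (X * R)) :=
  [/\ (forall (a : R) z w, G z -> G w -> G (a *: z.1 + w.1, a * z.2 + w.2)),
      (forall x a b, G (x, a) -> G (x, b) -> a = b) &
      (forall z, G z -> z.2 <= p z.1)].

Let G0 : set (X * R) := [set z | exists v l, V v /\ z = (v + l *: x0, l)].

Let x0V : ~ V x0.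
Proof. by move=> /hd; rewrite subrr normr0 leNgt d_gt0. Qed.

Let VZ (a : R) u : V u -> V (a *: u).
Proof. by move=> Vu; have := hV.2 a u 0 Vu hV.1; rewrite addr0. Qed.
Let VB u v : V u -> V v -> V (u - v).
Proof. by move=> Vu Vv; have := hV.2 (-1) v u Vv Vu; rewrite scaleN1r addrC. Qed.

Lemma good_G0 : good G0.
Proof.
split.
- move=> a _ _ [v [l [Vv ->]]] [v' [l' [Vv' ->]]] /=.
  exists (a *: v + v'), (a * l + l'); split; first exact: hV.2.
  congr pair.
  by rewrite scalerDr scalerA scalerDl addrACA.
- move=> x a b [v [l [Vv [-> ->]]]] [v' [l' [Vv' [e ->]]]].
  apply: contrapT => ne.
  have : (l - l') *: x0 = v' - v.
    by rewrite scalerBl; apply: swap_eq.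
  move=> e2; apply: x0V.
  have -> : x0 = (l - l')^-1 *: (v' - v).
    by rewrite -e2 scalerA mulVf ?scale1r // subr_eq0; apply/eqP.
  by apply: VZ; apply: VB.
- move=> _ [v [l [Vv ->]]] /=.
  case: (leP l 0) => l0; first by apply: le_trans l0 _.
  have -> : v + l *: x0 = l *: (x0 - (- l^-1 *: v)).
    by rewrite scalerDr scaleNr opprK scalerA mulfV ?gt_eqF // scale1r addrC.
  rewrite pZ; last exact: ltW.
  rewrite -[X in X <= _](mulr1 l) ler_pM2l // /p ler_pdivlMr // mul1r.
  by apply: hd; apply: VZ.
Qed.

Definition Pg (G : set (X * R)) := G = set0 \/ (G0 `<=` G /\ good G).

Lemma chainP (F : set (set (X * R))) : F `<=` Pg -> total_on F subset ->
  Pg (\bigcup_(G in F) G).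
Proof.
move=> FP tot.
have [[G1 FG1 [z G1z]]|none] := pselect (exists2 G, F G & G !=set0); last first.
  left; apply/seteqP; split => // z [G FG Gz]; apply: none; exists G => //; by exists z.
have goodof : forall G z, F G -> G z -> good G /\ G0 `<=` G.
  move=> G z' FG Gz; case: (FP G FG) => [e|[h1 h2]]; [by rewrite e in Gz | by split].
have two : forall z w, (\bigcup_(G in F) G) z -> (\bigcup_(G in F) G) w ->
    exists H, [/\ F H, good H, H z & H w].
  move=> z' w [Gz FGz Gzz] [Gw FGw Gww].
  case: (tot _ _ FGz FGw) => sub.
    exists Gw; split => //; [by case: (goodof _ _ FGw Gww) | exact: sub].
  exists Gz; split => //; [by case: (goodof _ _ FGz Gzz) | exact: sub].
right; split.
  by move=> y G0y; exists G1 => //; case: (goodof _ _ FG1 G1z) => _; apply.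
split.
- move=> a z' w Uz Uw; have [H [FH [lin _ _] Hz Hw]] := two _ _ Uz Uw.
  by exists H => //; exact: lin.
- move=> x a b Ua Ub; have [H [FH [_ fn _] Ha Hb]] := two _ _ Ua Ub.
  exact: fn Ha Hb.
- move=> z' [G FG Gz]; by case: (goodof _ _ FG Gz) => -[_ _ h] _; exact: h.
Qed.

Lemma HB_sep : exists F : X -> R, dual_elt F /\ F x0 = 1 /\ forall y, V y -> F y = 0.
Proof.
have [A [PA maxA]] := Zorn_bigcup chainP.
have G0ne : G0 (0, 0).
  by exists 0, 0; split; [exact: hV.1 | rewrite scale0r addr0].
have [G0A [lin fn dom]] : G0 `<=` A /\ good A.
  case: PA => // eA; exfalso; apply: (maxA G0); last by right; split => //; exact: good_G0.
  rewrite eA; split => //; move=> /(_ _ G0ne) //.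
have A00 : A (0, 0) by exact: G0A.
have Ascale : forall (a : R) y al, A (y, al) -> A (a *: y, a * al).
  by move=> a y al Ay; have := lin a _ _ Ay A00; rewrite /= !addr0.
have total : forall x, exists a, A (x, a).
  move=> x1; apply: contrapT => nx1.
  pose E := [set t | exists y al, A (y, al) /\ t = al - p (y - x1)].
  have key : forall y al w be, A (y, al) -> A (w, be) ->
      al - p (y - x1) <= p (w + x1) - be.
    move=> y al w be Ay Aw.
    have := dom _ (lin 1 _ _ Ay Aw); rewrite /= !scale1r !mul1r => h.
    have : p (y + w) <= p (y - x1) + p (w + x1).
      by have := pD (y - x1) (w + x1); rewrite addrACA addNr addr0.
    move=> h2; lra.
  have supE : has_sup E.
    split; first by exists (0 - p (0 - x1)), 0, 0.
    exists (p (0 + x1) - 0) => _ [y [al [Ay ->]]]; exact: key.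
  pose c := sup E.
  have c_ge : forall y al, A (y, al) -> al - p (y - x1) <= c.
    by move=> y al Ay; apply: sup_upper_bound => //; exists y, al.
  have c_le : forall w be, A (w, be) -> c <= p (w + x1) - be.
    move=> w be Aw; apply: ge_sup; first by case: supE.
    by move=> _ [y [al [Ay ->]]]; exact: key.
  pose B := [set z | exists y al l, A (y, al) /\ z = (y + l *: x1, al + l * c)].
  apply: (maxA B).
    split.
      by move=> [y al] Ay; exists y, al, 0; rewrite scale0r mul0r !addr0.
    move=> /(_ (x1, c)) h; apply: nx1; exists c; apply: h.
    by exists 0, 0, 1; rewrite add0r scale1r mul1r add0r.
  right; split.
    by move=> z G0z; case: z G0z => y al G0z; exists y, al, 0; split; [exact: G0A | rewrite scale0r mul0r !addr0].
  split.
  - move=> a _ _ [y [al [l [Ay ->]]]] [y' [al' [l' [Ay' ->]]]] /=.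
    exists (a *: y + y'), (a * al + al'), (a * l + l'); split; first exact: lin Ay Ay'.
    congr pair; first by rewrite scalerDr scalerA scalerDl addrACA.
    ring.
  - move=> x a b [y [al [l [Ay [ex ea]]]]] [y' [al' [l' [Ay' [ex' eb]]]]].
    have ll : l = l'.
      apply: contrapT => ne; apply: nx1.
      have e2 : (l - l') *: x1 = y' - y.
        by rewrite scalerBl; apply: swap_eq; rewrite -ex.
      exists ((l - l')^-1 * (al' - al)).
      have -> : x1 = (l - l')^-1 *: (y' - y).
        by rewrite -e2 scalerA mulVf ?scale1r // subr_eq0; apply/eqP.
      apply: Ascale.
      by have := lin (-1) _ _ Ay Ay'; rewrite /= scaleN1r mulN1r addrC [- al + _]addrC.
    subst l'.
    have yy : y = y' by apply: (addIr (l *: x1)); rewrite -ex ex'.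
    subst y'.
    by rewrite ea eb (fn _ _ _ Ay Ay').
  - move=> _ [y [al [l [Ay ->]]]] /=.
    case: (ltgtP l 0) => l0.
    + have m0 : 0 < - l by rewrite oppr_gt0.
      have := c_ge _ _ (Ascale (- l)^-1 _ _ Ay).
      have -> : y + l *: x1 = (- l) *: ((- l)^-1 *: y - x1).
        by rewrite scalerBr scalerA mulfV ?gt_eqF // scale1r scaleNr opprK.
      rewrite pZ; last exact: ltW m0.
      move=> h.
      have : (- l) * ((- l)^-1 * al - p ((- l)^-1 *: y - x1)) <= (- l) * c.
        by rewrite ler_pM2l.
      rewrite mulrBr mulrA mulfV ?gt_eqF // mul1r; lra.
    + have := c_le _ _ (Ascale l^-1 _ _ Ay).
      have -> : y + l *: x1 = l *: (l^-1 *: y + x1).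
        by rewrite scalerDr scalerA mulfV ?gt_eqF // scale1r.
      rewrite pZ; last exact: ltW l0.
      move=> h.
      have : l * c <= l * (p (l^-1 *: y + x1) - l^-1 * al).
        by rewrite ler_pM2l.
      rewrite mulrBr mulVKf ?gt_eqF //; lra.
    + by subst l; rewrite scale0r mul0r !addr0; exact: (dom _ Ay).
pose F (x : X) : R := xget 0 (fun a => A (x, a)).
have AF : forall x, A (x, F x) by move=> x; exact: (xgetPex 0 (total x)).
have Flin : forall (a : R) u v, F (a *: u + v) = a * F u + F v.
  by move=> a u v; apply: (fn (a *: u + v)); [exact: AF | exact: (lin a _ _ (AF u) (AF v))].
have F0 : F 0 = 0 by apply: fn (AF 0) A00.
have FN : forall u, F (- u) = - F u.
  by move=> u; have := Flin (-1) u 0; rewrite F0 addr0 scaleN1r mulN1r addr0.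
have Fb : forall u, `|F u| <= `|u| / d.
  move=> u; rewrite ler_norml; apply/andP; split.
    by rewrite lerNl -FN; have := dom _ (AF (- u)); rewrite /= /p normrN.
  by have := dom _ (AF u).
exists F; split; [split => // |split].
- move=> x; apply/cvgrPdist_lt => e e0.
  have hn : \forall t \near x, `|x - t| < e * d.
    exact: (@cvgr_dist_lt _ _ _ (nbhs x) _ id x (@cvg_id _ _) (e * d) (mulr_gt0 e0 d_gt0)).
  apply: filterS hn => t ht.
  have -> : F x - F t = F (x - t).
    by have := Flin (-1) t x; rewrite scaleN1r mulN1r addrC [- F t + _]addrC => <-.
  apply: le_lt_trans (Fb _) _.
  by rewrite ltr_pdivrMr.
- apply: fn (AF x0) _; apply: G0A; exists 0, 1; split; first exact: hV.1.
  by rewrite add0r scale1r.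
- move=> y Vy; apply: fn (AF y) _; apply: G0A; exists y, 0; split => //.
  by rewrite scale0r addr0.
Qed.
End HB.

Section Span.
Variables (R : realType) (X : normedModType R).

Lemma span_subsp (L : set X) : subsp (lin_span L).
Proof.
split.
  exists 0%N, (fun _ => 0), (fun _ => 0); split; first by case.
  by rewrite big_ord0.
move=> a u v [n [au [vu [Lu ->]]]] [m [av [vv [Lv ->]]]].
exists (n + m)%N, (fun k => match fintype.split k with inl i => a * au i | inr j => av j end),
  (fun k => match fintype.split k with inl i => vu i | inr j => vv j end).
split; first by move=> k; case: (fintype.split k).
have hl : forall i : 'I_n, fintype.split (lshift m i) = inl i := fun i => unsplitK (inl _ i).
have hr : forall j : 'I_m, fintype.split (rshift n j) = inr j := fun j => unsplitK (inr _ j).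
rewrite big_split_ord /=.
rewrite scaler_sumr; congr (_ + _); apply: eq_bigr => i _.
  by rewrite hl scalerA.
by rewrite hr.
Qed.

Lemma span_sub (L : set X) : L `<=` lin_span L.
Proof.
move=> u Lu; exists 1%N, (fun _ => 1), (fun _ => u); split => //.
by rewrite big_ord1 scale1r.
Qed.

Lemma not_closure_dist (A : set X) (x : X) : ~ closure A x ->
  exists2 d : R, 0 < d & forall y, A y -> d <= `|x - y|.
Proof.
move=> ncl.
have : exists B, nbhs x B /\ ~ (A `&` B !=set0).
  apply: contrapT => h; apply: ncl => B nB; apply: contrapT => nAB; apply: h; by exists B.
move=> [B [/nbhs_ballP [e e0 eB] nAB]].
exists e => // y Ay; rewrite leNgt; apply/negP => lt.
apply: nAB; exists y; split => //; apply: eB.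
by rewrite -ball_normE /ball_ /=.
Qed.
End Span.

Section DualLin.
Variables (R : realType) (X : normedModType R) (f : X -> R).
Hypothesis hf : dual_elt f.

Lemma dual0 : f 0 = 0.
Proof.
have := hf.1 1 0 0; rewrite scale1r addr0 mul1r => e.
by apply: (addrI (f 0)); rewrite addr0 -e.
Qed.
Lemma dualZ (a : R) u : f (a *: u) = a * f u.
Proof. by have := hf.1 a u 0; rewrite addr0 dual0 addr0. Qed.
Lemma dualD u v : f (u + v) = f u + f v.
Proof. by have := hf.1 1 u v; rewrite scale1r mul1r. Qed.
End DualLin.

Section BaireAvoid.
Variables (R : realType) (X : completeNormedModType R).

Lemma nonker_open (f : X -> R) : dual_elt f -> open [set x | f x != 0].
Proof.
move=> hf; have := (continuousP f).1 hf.2 _ (@open_neq R 0).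
by [].
Qed.

Lemma nonker_dense (f : X -> R) : dual_elt f -> (exists z, f z != 0) ->
  dense [set x | f x != 0].
Proof.
move=> hf [z fz] O [y Oy] oO.
case: (eqVneq (f y) 0) => fy; last by exists y.
have : nbhs y O by apply: open_nbhs_nbhs.
move=> /nbhs_ballP [e e0 eO].
pose t := (e / 2) / (`|z| + 1).
have z1 : 0 < `|z| + 1 by rewrite ltr_wpDl.
have t0 : 0 < t by rewrite /t divr_gt0 // divr_gt0.
exists (y + t *: z); split.
  apply: eO; rewrite -ball_normE /ball_ /= opprD addNKr normrN normrZ gtr0_norm //.
  apply: (@le_lt_trans _ _ (t * (`|z| + 1))).
    by rewrite ler_pM2l // lerDl.
  by rewrite /t mulfVK ?gt_eqF // ltr_pdivrMr // ltr_pMr // ltr1n.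
change (f (y + t *: z) != 0).
rewrite dualD // fy add0r dualZ // mulf_neq0 //.
by rewrite gt_eqF.
Qed.

Lemma avoid_countable (C : set (X -> R)) : countable C ->
  (forall f, C f -> dual_elt f /\ exists z, f z != 0) ->
  exists x : X, forall f, C f -> f x != 0.
Proof.
move=> /countable_injP [c cinj] hC.
pose Fam (i : nat) := [set x : X | forall f, C f -> c f = i -> f x != 0].
have odF : forall i, open (Fam i) /\ dense (Fam i).
  move=> i; case: (pselect (exists f, C f /\ c f = i)) => [[f [Cf cfi]]|none].
    have -> : Fam i = [set x | f x != 0].
      apply/seteqP; split => x /=.
        by move=> h; apply: h.
      move=> fx g Cg cgi.
      have -> : g = f by apply: cinj; rewrite ?inE // cgi.
      exact: fx.
    have [hf nz] := hC f Cf.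
    by split; [exact: nonker_open | exact: nonker_dense].
  have -> : Fam i = setT.
    apply/seteqP; split => // x _ f Cf cfi; exfalso; apply: none; by exists f.
  split; first exact: openT.
  by move=> O [y Oy] _; exists y.
have := Baire odF.
move=> /(_ setT) [||x [_ hx]]; [by exists 0 | exact: openT |].
by exists x => f Cf; apply: (hx (c f)).
Qed.
End BaireAvoid.

Lemma small0 (R : realType) (a : R) : 0 <= a -> (forall n : nat, a <= 2 / (n.+1)%:R) -> a = 0.
Proof.
move=> a0 h; case: (eqVneq a 0) => // an; exfalso.
have ap : 0 < a by rewrite lt_def an a0.
have := @archi_boundP _ (2 / a) (ltW (divr_gt0 (ltr0Sn _ 1) ap)).
set N := Num.Def.archi_bound _ => hN.
have := h N; rewrite ler_pdivlMr ?ltr0Sn // => h1.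
move: hN; rewrite ltr_pdivrMr // => h2.
move: h1; rewrite -natr1 => h1.
nra.
Qed.


Lemma dual_inj (R : realType) (X : normedModType R) (DD : set (X -> R))
    (psi : (X -> R) -> R) :
  dual_dense DD -> {in DD &, injective psi} ->
  exists Phi : (X -> R) -> R, forall f g, dual_elt f -> dual_elt g -> Phi f = Phi g -> f = g.
Proof.
move=> [DDsub DDapprox] psiinj.
have [gs gsinj] := seq_inj R.
pose approx (f : X -> R) (n : nat) := pick_or (fun g => DD g /\ forall x : X, `|x| <= 1 ->
  `|f x - g x| <= (n.+1%:R)^-1) (fun _ => 0).
have approxP : forall f n, dual_elt f -> DD (approx f n) /\
    forall x, `|x| <= 1 -> `|f x - approx f n x| <= (n.+1%:R)^-1.
  move=> f n hf.
  apply: (@pick_orP _ (fun g => DD g /\ forall x : X, `|x| <= 1 -> `|f x - g x| <= (n.+1%:R)^-1)).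
  have np : 0 < (n.+1%:R)^-1 :> R by rewrite invr_gt0 ltr0Sn.
  have [g DDg hg] := DDapprox f hf (n.+1%:R)^-1 np.
  by exists g.
exists (fun f => gs (fun n => psi (approx f n))).
move=> f g hf hg /gsinj e.
have eqa : forall n, approx f n = approx g n.
  move=> n; apply: psiinj; rewrite ?inE.
  - exact: (approxP f n hf).1.
  - exact: (approxP g n hg).1.
  - exact: (congr1 (fun c => c n) e).
have unit : forall x, `|x| <= 1 -> f x = g x.
  move=> x x1; apply/eqP; rewrite -subr_eq0 -normr_eq0; apply/eqP; apply: small0 => // n.
  have h1 := (approxP f n hf).2 x x1; have h2 := (approxP g n hg).2 x x1.
  rewrite -eqa distrC in h2.
  have h3 := ler_distD (approx f n x) (f x) (g x).
  apply: (le_trans h3); apply: le_trans (lerD h1 h2) _.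
  rewrite ler_pdivlMr ?ltr0Sn // mulrDl mulVf ?pnatr_eq0 //.
apply/funext => x; case: (eqVneq x 0) => [->|xn]; first by rewrite (dual0 hf) (dual0 hg).
have nx : 0 < `|x| by rewrite normr_gt0.
have -> : x = `|x| *: (`|x|^-1 *: x) by rewrite scalerA mulfV ?gt_eqF // scale1r.
rewrite (dualZ hf) (dualZ hg) unit //.
by rewrite normrZ normfV normr_id mulVf ?gt_eqF.
Qed.

Lemma card_le_get T U (A : set T) (B : set U) (u0 : U) : card_le A B ->
  exists f : T -> U, {in A &, injective f}.
Proof.
move/card_leP => [f].
exists (fun x => match pselect (A x) with left h => val (f (SigSub (mem_set h))) | right _ => u0 end).
move=> x y; rewrite !inE => Ax Ay.
case: pselect => // hx; case: pselect => // hy /val_inj e.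
have := @inj _ _ _ f _ _ (in_setT _) (in_setT _) e.
by move=> /(congr1 val) /=.
Qed.

Unset Implicit Arguments.

Theorem corollary3p2 (R : realType) (X : completeNormedModType R) :
  CH R ->
  dens_is_aleph1 (@dense X) ->
  dens_is_aleph1 (@dual_dense R X) ->
  exists S : set X, overcomplete S.
Proof.
move=> hCH [[DX [DXd DXa]] DXunc] [[DD [DDd DDa]] DDunc].
have Runc : ~ countable [set: R] := hCH.1.
case: (hCH) => _ [r [rtot [ranti [rtr [rmin rcnt]]]]].
have rrefl : forall t : R, r t t by move=> t; case: (rtot t t I I).
have [psi psiinj] := card_le_get 0 (aleph1_le DDa Runc).
have [Phi Phiinj] := dual_inj DDd psiinj.
have [e [he [z0 ez0]]] : exists e : X -> R, dual_elt e /\ exists z, e z != 0.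
  apply: contrapT => ne; apply: DDa.1.
  apply: (sub_countable (subset_card_le (B := [set (fun _ : X => 0 : R)]) _)) (countable1 _).
  move=> g DDg; apply/funext => z; apply: contrapT => gz; apply: ne.
  exists g; split; first exact: DDd.1 _ DDg.
  by exists z; apply/eqP.
pose m (t : R) := if pselect (r t (Phi e)) then Phi e else t.
have mt : forall t, r t (m t) /\ r (Phi e) (m t).
  move=> t; rewrite /m; case: pselect => h; first by split.
  by split => //; case: (rtot t (Phi e) I I).
pose C (t : R) := [set f : X -> R | (dual_elt f /\ exists z, f z != 0) /\ r (Phi f) (m t)].
have Ccnt : forall t, countable (C t).
  move=> t; apply: sub_countable (rcnt (m t) I).
  apply: (card_le_fun (f := Phi)).
    by move=> f [_ h]; split.
  by move=> f g [[hf _] _] [[hg _] _]; apply: Phiinj.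
have Cgood : forall t f, C t f -> dual_elt f /\ exists z, f z != 0.
  by move=> t f [].
have eC : forall t, C t e by move=> t; split; [split => //; exists z0 | exact: (mt t).2].
pose xs (t : R) := pick_or (fun x => forall f, C t f -> f x != 0) 0.
have xsP : forall t f, C t f -> f (xs t) != 0.
  move=> t; apply: (@pick_orP _ (fun x => forall f, C t f -> f x != 0)); exact: avoid_countable (Ccnt t) (Cgood t).
pose s (t : R) := (expR t / e (xs t)) *: xs t.
have es : forall t, e (s t) = expR t.
  by move=> t; rewrite /s (dualZ he) mulfVK //; exact: xsP (eC t).
have fs : forall t f, C t f -> f (s t) != 0.
  move=> t f Cf; rewrite /s (dualZ (Cgood t f Cf).1) mulf_neq0 //; last exact: xsP.
  rewrite mulf_neq0 //; first by rewrite gt_eqF ?expR_gt0.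
  by rewrite invr_eq0; exact: xsP (eC t).
pose S := range s.
have R_le_S : card_le [set: R] S.
  apply: (card_le_fun (f := s)); first by move=> t _; exists t.
  by move=> t t' _ _ e2; apply: expR_inj; rewrite -!es e2.
have S_le_R : card_le S [set: R] by exact: card_image_le.
have Sunc : ~ countable S.
  by move=> cS; apply: Runc; exact: card_le_trans R_le_S cS.
exists S; split; first split.
- exists DX; split => //; apply: Cantor_Bernstein.
    exact: card_le_trans S_le_R (aleph1_le hCH (DXunc DX DXd)).
  exact: aleph1_le DXa Sunc.
- by move=> D Dd; exact: card_le_trans S_le_R (aleph1_le hCH (DXunc D Dd)).
move=> L LS /card_eqPle [_ SL].
have Lunc : ~ countable L by move=> cL; apply: Sunc; exact: card_le_trans SL cL.
apply/seteqP; split => // x0 _; apply: contrapT => ncl.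
have [d d0 hd] := not_closure_dist ncl.
have [F [hF [F1 F0]]] := HB_sep (span_subsp L) d0 hd.
have Fnz : exists z, F z != 0 by exists x0; rewrite F1 oner_neq0.
apply: Lunc.
have sub : L `<=` s @` [set t | setT t /\ r t (Phi F)].
  move=> l Ll; have [t _ stl] := LS l Ll.
  exists t => //; split => //.
  case: (rtot t (Phi F) I I) => // h.
  exfalso; have CF : C t F.
    split; first by split.
    by apply: rtr (mt t).1 => //.
  by have := fs t F CF; rewrite stl F0 ?eqxx //; apply: span_sub.
apply: sub_countable (subset_card_le sub) _.
exact: countable_image (rcnt (Phi F) I).
Qed.
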